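(* Let $\omega$ be a substitution rule on $\mathbb{R}$ whose alphabet has more than one element, all prototiles having intervals as supports, and which is primitive and irreducible. Let $\mathcal{T}_0$ be a repetitive fixed point of $\omega$ and let $\mathcal{T}\in X_{\mathcal{T}_0}$. Then for every tile $T\in\mathcal{T}$ and every nonzero $v\in\mathbb{R}$, the set $\{T+kv: k\in\mathbb{N}\}$ is not contained in $\mathcal{T}$. Consequently, for every nonempty finite $\mathcal{T}_0$-legal patch $\mathcal{P}$ and every $v\neq0$ there is $n$ such that $\bigcup_{k=1}^n(\mathcal{P}+kv)$ is not $\mathcal{T}_0$-legal.
   Context: A tile in $\mathbb{R}$ is a compact set equal to the closure of its interior, possibly labeled from a finite set. Patches: sets of tiles with pairwise disjoint interiors; tilings: patches with support $\mathbb{R}$; a patch $\mathcal{P}$ is $\mathcal{T}$-legal if $\mathcal{P}+x\subset\mathcal{T}$ for some $x$. A substitution rule on $\mathbb{R}$: finite alphabet $\mathcal{A}=\{T_1,\dots,T_m\}$ of prototiles, expansion factor $\lambda>1$, and map $\omega$ sending each $T_j$ to a finite patch of translates of prototiles with $\operatorname{supp}\omega(T_j)=\lambda\operatorname{supp}T_j$, extended by $\omega(P+x)=\omega(P)+\lambda x$ and unions. Its substitution matrix $M_\omega$ has $(i,j)$ entry equal to the number of translates of $T_i$ in $\omega(T_j)$; $\omega$ is primitive if some power of $M_\omega$ has all entries positive and irreducible if the characteristic polynomial of $M_\omega$ is irreducible over $\mathbb{Q}$. A fixed point is a tiling $\mathcal{T}_0$ of translates of prototiles with $\omega(\mathcal{T}_0)=\mathcal{T}_0$;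 it is repetitive if every finite patch occurring in it occurs as a translate in every interval of some fixed length. The hull $X_{\mathcal{T}_0}$ is the closure of $\{\mathcal{T}_0+x:x\in\mathbb{R}\}$ in the local matching topology (two patches are close if, after translating each by a small amount, they agree on a large interval around $0$). *)

(* Defs.v *)
From Stdlib Require Import Reals Rtopology List.
From mathcomp Require Import all_boot all_algebra.

Set Implicit Arguments.
Unset Strict Implicit.
Unset Printing Implicit Defensive.

Local Open Scope R_scope.

Record tile := Tile { tsupp : R -> Prop ; tlab : nat }.

Definition is_tile (T : tile) : Prop :=
  (exists y, tsupp T y) /\ compact (tsupp T) /\
  (forall y, tsupp T y <-> adherence (interior (tsupp T)) y).

Definition tr (T : tile) (x : R) : tile :=
  Tile (fun y => tsupp T (y - x)) (tlab T).

Definition tset := tile -> Prop.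
Definition ptr (P : tset) (x : R) : tset :=
  fun T => exists T', P T' /\ T = tr T' x.
Definition of_list (l : seq tile) : tset := fun T => List.In T l.

Definition is_patch (P : tset) : Prop :=
  (forall T, P T -> is_tile T) /\
  (forall T1 T2, P T1 -> P T2 -> T1 <> T2 ->
     forall y, ~ (interior (tsupp T1) y /\ interior (tsupp T2) y)).
Definition is_tiling (P : tset) : Prop :=
  is_patch P /\ forall y, exists T, P T /\ tsupp T y.

Definition legal (Q P : tset) : Prop :=
  exists x, forall T, P T -> Q (tr T x).

(** Substitution rule data: m prototiles [proto], expansion [lam],
    and [om j] the list of pairs (i, a) meaning the tile proto i + a of
    the patch omega(proto j). *)
Definition subst_patch (m : nat) (proto : 'I_m -> tile)
  (om : 'I_m -> seq ('I_m * R)) (j : 'I_m) : seq tile :=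
  map (fun p => tr (proto p.1) p.2) (om j).

Definition is_subst_rule (m : nat) (proto : 'I_m -> tile) (lam : R)
  (om : 'I_m -> seq ('I_m * R)) : Prop :=
  1 < lam /\
  (forall j, is_tile (proto j)) /\
  (forall i j x, i <> j -> proto i <> tr (proto j) x) /\
  (forall j, List.NoDup (subst_patch proto om j)) /\
  (forall j, is_patch (of_list (subst_patch proto om j))) /\
  (forall j y, (exists T, List.In T (subst_patch proto om j) /\ tsupp T y)
               <-> (exists z, tsupp (proto j) z /\ y = lam * z)).

(** Prototile with an interval as support (a nondegenerate closed interval,
    as it must be a tile). *)
Definition interval_support (T : tile) : Prop :=
  exists a b, a < b /\ forall y, tsupp T y <-> a <= y <= b.

Definition subst_mx (m : nat) (om : 'I_m -> seq ('I_m * R)) : 'M[rat]_m :=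
  \matrix_(i < m, j < m) ((count (fun p : 'I_m * R => p.1 == i) (om j))%:R)%R.

Definition mxpow (m : nat) (A : 'M[rat]_m) (k : nat) : 'M[rat]_m :=
  iter k (mulmx A) 1%:M%R.

Definition primitive_mx (m : nat) (A : 'M[rat]_m) : Prop :=
  exists k : nat, forall i j : 'I_m, (0 < mxpow A k i j)%R.

Definition irreducible_mx (m : nat) (A : 'M[rat]_m) : Prop :=
  irreducible_poly (char_poly A).

(** omega applied to a set of translates of prototiles, using
    omega(P + x) = omega(P) + lam x and unions. *)
Definition subst_set (m : nat) (proto : 'I_m -> tile) (lam : R)
  (om : 'I_m -> seq ('I_m * R)) (P : tset) : tset :=
  fun T => exists (j : 'I_m) (x : R), P (tr (proto j) x) /\
    exists p, List.In p (om j) /\ T = tr (tr (proto p.1) p.2) (lam * x).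

Definition fixed_point (m : nat) (proto : 'I_m -> tile) (lam : R)
  (om : 'I_m -> seq ('I_m * R)) (T0 : tset) : Prop :=
  is_tiling T0 /\
  (forall T, T0 T -> exists (j : 'I_m) (x : R), T = tr (proto j) x) /\
  (forall T, subst_set proto lam om T0 T <-> T0 T).

Definition repetitive (T0 : tset) : Prop :=
  forall l : seq tile, (forall T, List.In T l -> T0 T) ->
  exists L, 0 < L /\ forall a, exists x,
    (forall T, List.In T l -> T0 (tr T x)) /\
    (forall T y, List.In T l -> tsupp (tr T x) y -> a <= y <= a + L).

Definition agree_on (P Q : tset) (r : R) : Prop :=
  forall T, (P T /\ exists y, -r <= y <= r /\ tsupp T y) <->
            (Q T /\ exists y, -r <= y <= r /\ tsupp T y).

(** Hull: closure of the translation orbit of T0 in the local topology. *)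
Definition in_hull (T0 T : tset) : Prop :=
  is_tiling T /\
  forall eps, 0 < eps -> exists x a b, Rabs a < eps /\ Rabs b < eps /\
    agree_on (ptr T a) (ptr (ptr T0 x) b) (/ eps).

Definition union_shifts (P : seq tile) (v : R) (n : nat) : tset :=
  fun T => exists k : nat, (1 <= k <= n)%nat /\
    exists T', List.In T' P /\ T = tr T' (INR k * v).

(* Main.v *)
Require Import Defs.
From Stdlib Require Import Reals Rtopology List Lra Lia ZArith ClassicalEpsilon Classical.
From mathcomp Require Import all_boot all_algebra.
From mathcomp Require Import Rstruct zify.
Set Implicit Arguments.
Unset Strict Implicit.
Local Open Scope R_scope.

Definition ivl (t : tile) (u w : R) : Prop :=
  0 < w /\ forall y, tsupp t y <-> u <= y <= u + w.

Lemma ivl_uniq t u w u' w' : ivl t u w -> ivl t u' w' -> u = u' /\ w = w'.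
Proof.
move=> [Hw H] [Hw' H'].
have h1 := proj1 (H' u) (proj2 (H u) ltac:(lra)).
have h2 := proj1 (H u') (proj2 (H' u') ltac:(lra)).
have h3 := proj1 (H' (u+w)) (proj2 (H (u+w)) ltac:(lra)).
have h4 := proj1 (H (u'+w')) (proj2 (H' (u'+w')) ltac:(lra)).
split; lra.
Qed.

Lemma ivl_interior t u w z : ivl t u w -> u < z < u + w -> interior (tsupp t) z.
Proof.
move=> [Hw H] Hz.
have hd : 0 < Rmin (z - u) (u + w - z).
  apply Rmin_pos; lra.
exists (mkposreal _ hd) => y; rewrite /disc /= => hy.
apply/H.
have := Rmin_l (z - u) (u + w - z); have := Rmin_r (z - u) (u + w - z).
move: hy; rewrite /Rabs; case: Rcase_abs => ? ? ? ?; lra.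
Qed.

Lemma ivl_tr t u w x : ivl t u w -> ivl (tr t x) (u + x) w.
Proof.
move=> [Hw H]; split => // y /=; rewrite H; lra.
Qed.

Lemma overlap (P : tset) t1 t2 u1 w1 u2 w2 z :
  is_patch P -> P t1 -> P t2 -> ivl t1 u1 w1 -> ivl t2 u2 w2 ->
  u1 < z < u1 + w1 -> u2 < z < u2 + w2 -> u1 = u2 /\ w1 = w2.
Proof.
move=> [_ HP] P1 P2 I1 I2 z1 z2.
case: (classic (t1 = t2)) => [e|ne].
  by subst; exact: ivl_uniq I1 I2.
exfalso; apply: (HP _ _ P1 P2 ne z); split.
  exact: ivl_interior I1 z1.
exact: ivl_interior I2 z2.
Qed.

Definition inU (X : Type) (lo w : X -> R) (L : list X) (z : R) :=
  exists x, In x L /\ lo x <= z <= lo x + w x.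

Lemma closed_union (X : Type) (lo w : X -> R) (L : list X) c :
  ~ inU lo w L c -> exists d, 0 < d /\ forall z, Rabs (z - c) < d -> ~ inU lo w L z.
Proof.
elim: L => [|x L IH] Hc.
  exists 1; split; first lra. by move=> z _ [y [[]]].
have Hc' : ~ inU lo w L c by move=> [y [Hy Hz]]; apply: Hc; exists y; split => //; right.
have Hx : ~ (lo x <= c <= lo x + w x) by move=> H; apply: Hc; exists x; split => //; left.
have [d [Hd Hd']] := IH Hc'.
have [dx [Hdx Hdx']] : exists dx, 0 < dx /\ forall z, Rabs (z - c) < dx -> ~ (lo x <= z <= lo x + w x).
  case: (Rlt_le_dec c (lo x)) => h.
    exists (lo x - c); split; first lra.
    move=> z; rewrite /Rabs; case: Rcase_abs => ? ? ?; lra.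
  exists (c - (lo x + w x)); split; first lra.
  move=> z; rewrite /Rabs; case: Rcase_abs => ? ? ?; lra.
exists (Rmin d dx); split; first by apply Rmin_pos.
move=> z Hz [y [[<-|Hy] Hzy]].
  apply: (Hdx' z) => //; have := Rmin_r d dx; lra.
apply: (Hd' z); first by have := Rmin_l d dx; lra.
by exists y.
Qed.

Definition sumw (X : Type) (w : X -> R) (L : list X) := fold_right (fun x s => w x + s) 0 L.

Lemma sumw_app (X : Type) (w : X -> R) L1 L2 : sumw w (L1 ++ L2) = sumw w L1 + sumw w L2.
Proof. elim: L1 => [|x L1 IH] /=; rewrite ?IH; lra. Qed.

Lemma finlen_aux (X : Type) (f : X -> tile) (lo w : X -> R) (n : nat) :
  forall (L : list X) (A B : R), (length L <= n)%nat ->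
  (forall x, In x L -> ivl (f x) (lo x) (w x)) ->
  NoDup (List.map f L) ->
  (forall x y, In x L -> In y L -> f x <> f y -> forall z,
      ~ (lo x < z < lo x + w x /\ lo y < z < lo y + w y)) ->
  A < B ->
  (forall z, inU lo w L z <-> A <= z <= B) ->
  B - A = sumw w L.
Proof.
elim: n => [|n IH] L A B Hn Hiv Hnd Hdis HAB Hcov.
  case: L Hn Hiv Hnd Hdis Hcov => // _ _ _ _ Hcov.
  by have [x [[]]] := proj2 (Hcov A) ltac:(lra).
have [x [HxL Hx]] := proj2 (Hcov B) ltac:(lra).
have [Hwx _] := Hiv x HxL.
have HxB : lo x + w x <= B.
  by apply (proj1 (Hcov (lo x + w x))); exists x; split => //; lra.
have Heq : lo x + w x = B by lra.
have HxA : A <= lo x.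
  by apply (proj1 (Hcov (lo x))); exists x; split => //; lra.
have [L1 [L2 EL]] := in_split x L HxL.
subst L.
have Hnd' : NoDup (List.map f (L1 ++ L2)).
  move: Hnd; rewrite !map_app /= => Hnd; exact: NoDup_remove_1 Hnd.
have Hnx : forall y, In y (L1 ++ L2) -> f y <> f x.
  move=> y Hy Hfy; move: Hnd; rewrite map_app /= => Hnd.
  apply: (NoDup_remove_2 _ _ _ Hnd); rewrite -map_app -Hfy; exact: in_map.
have Hin : forall y, In y (L1 ++ L2) -> In y (L1 ++ x :: L2).
  move=> y; rewrite !in_app_iff /=; tauto.
have Hleft : forall y, In y (L1 ++ L2) -> lo y + w y <= lo x.
  move=> y Hy.
  have [Hwy _] := Hiv y (Hin y Hy).
  have Hy1 : lo y + w y <= B by apply (proj1 (Hcov (lo y + w y))); exists y; split => //; [exact: Hin|lra].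
  apply: Rnot_lt_le => Hlt.
  apply: (Hdis x y HxL (Hin y Hy) (fun e => Hnx y Hy (esym e))
            ((Rmax (lo y) (lo x) + Rmin (lo y + w y) B) / 2)).
  have := Rmax_l (lo y) (lo x); have := Rmax_r (lo y) (lo x).
  have := Rmin_l (lo y + w y) B; have := Rmin_r (lo y + w y) B.
  case: (Rmax_Rle (lo y) (lo x) (Rmax (lo y) (lo x))) => _ _.
  have : Rmax (lo y) (lo x) < Rmin (lo y + w y) B.
    apply Rmax_lub_lt; apply Rmin_glb_lt; lra.
  move=> ? ? ? ? ?; lra.
rewrite sumw_app /=.
case: (Rle_lt_or_eq_dec _ _ HxA) => HxA'; last first.
  (* lo x = A : L1 ++ L2 must be empty *)
  case E12: (L1 ++ L2) => [|y L'].
    move: E12 => /app_eq_nil [-> ->] /=; lra.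
  have Hy : In y (L1 ++ L2) by rewrite E12; left.
  have := Hleft y Hy; have [Hwy _] := Hiv y (Hin y Hy).
  have : A <= lo y by apply (proj1 (Hcov (lo y))); exists y; split => //; [exact: Hin|lra].
  lra.
have IHapp := IH (L1 ++ L2) A (lo x).
have Hlen : (length (L1 ++ L2) <= n)%nat.
  move: Hn; rewrite !app_length /= => /leP ?; apply/leP; lia.
have -> : sumw w L1 + (w x + sumw w L2) = w x + sumw w (L1 ++ L2) by rewrite sumw_app; lra.
rewrite -IHapp //; first lra.
- by move=> y Hy; apply: Hiv; exact: Hin.
- by move=> y1 y2 H1 H2; apply: Hdis; exact: Hin.
move=> z; split.
  move=> [y [Hy Hz]]; have := Hleft y Hy.
  have : A <= z by apply (proj1 (Hcov z)); exists y; split => //; exact: Hin.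
  have [Hwy _] := Hiv y (Hin y Hy).
  lra.
move=> Hz.
have Hlt : forall z, A <= z < lo x -> inU lo w (L1 ++ L2) z.
  move=> z' Hz'.
  have [y [Hy Hzy]] := proj2 (Hcov z') ltac:(lra).
  move: Hy; rewrite in_app_iff /= => [[Hy|[Hy|Hy]]].
  - by exists y; split => //; rewrite in_app_iff; left.
  - subst y; lra.
  - by exists y; split => //; rewrite in_app_iff; right.
case: (Rle_lt_or_eq_dec _ _ (proj2 Hz)) => Hz2; first by apply: Hlt; lra.
subst z.
apply: NNPP => Hn'.
have [d [Hd Hd']] := closed_union Hn'.
apply: (Hd' (Rmax A (lo x - d / 2))).
  have := Rmax_l A (lo x - d/2); have := Rmax_r A (lo x - d/2).
  have : Rmax A (lo x - d/2) < lo x by apply Rmax_lub_lt; lra.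
  rewrite /Rabs; case: Rcase_abs => ? ? ? ?; lra.
apply: Hlt.
have := Rmax_l A (lo x - d/2).
have : Rmax A (lo x - d/2) < lo x by apply Rmax_lub_lt; lra.
lra.
Qed.

Import GRing.Theory Num.Theory.

Ltac toR := rewrite -?RminusE -?RplusE -?RmultE -?RoppE -?R1E -?R0E.

Lemma in_seqmap (A B : Type) (f : A -> B) (s : seq A) y :
  List.In y (map f s) -> exists x, List.In x s /\ y = f x.
Proof.
elim: s => [|x s IH] //= [<-|H]; first by exists x; split => //; left.
by have [z [Hz ->]] := IH H; exists z; split => //; right.
Qed.

Lemma seqmap_In (A B : Type) (f : A -> B) (s : seq A) x :
  List.In x s -> List.In (f x) (map f s).
Proof. elim: s => [|z s IH] //= [<-|H]; [by left| by right; apply IH]. Qed.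

Lemma seqmapE (A B : Type) (f : A -> B) (s : seq A) : map f s = List.map f s.
Proof. by elim: s => //= x s ->. Qed.

Section Lc.
Variable m : nat.
Variable l : 'I_m -> R.

Definition Lc (w : 'cV[rat]_m) : R := (\sum_i l i * ratr (w i ord0))%R.

Lemma Lc_add w1 w2 : Lc (w1 + w2)%R = (Lc w1 + Lc w2)%R.
Proof. by rewrite /Lc -big_split; apply eq_bigr => i _; rewrite mxE rmorphD mulrDr. Qed.

Lemma Lc_scale k w : Lc (k *: w)%R = (ratr k * Lc w)%R.
Proof.
rewrite /Lc mulr_sumr; apply eq_bigr => i _; rewrite mxE rmorphM /=.
by rewrite mulrCA.
Qed.

Lemma Lc_opp w : Lc (- w)%R = (- Lc w)%R.
Proof. by rewrite -scaleN1r Lc_scale rmorphN1 mulN1r. Qed.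

Lemma Lc_sub w1 w2 : Lc (w1 - w2)%R = (Lc w1 - Lc w2)%R.
Proof. by rewrite Lc_add Lc_opp. Qed.

Lemma Lc0 : Lc 0%R = 0%R.
Proof. by rewrite /Lc big1 // => i _; rewrite mxE rmorph0 mulr0. Qed.

Lemma Lc_delta j : Lc (delta_mx j ord0) = l j.
Proof.
rewrite /Lc (bigD1 j) //= big1 ?addr0.
  by rewrite mxE !eqxx /= rmorph1 mulr1.
by move=> i /negbTE hi; rewrite mxE hi /= rmorph0 mulr0.
Qed.

End Lc.

Definition natv (m : nat) (w : 'cV[rat]_m) := forall i, exists k : nat, w i ord0 = k%:R%R.

Section Main.
Variable m : nat.
Variable proto : 'I_m -> tile.
Variable lam : R.
Variable om : 'I_m -> seq ('I_m * R).
Variable T0 : tset.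
Variables a l : 'I_m -> R.
Variable mu : R.
Hypothesis Hrule : is_subst_rule proto lam om.
Hypothesis Hfix : fixed_point proto lam om T0.
Hypothesis Hiv : forall j, ivl (proto j) (a j) (l j).
Hypothesis Hmu : 0 < mu.
Hypothesis Hmul : forall j, mu <= l j.

Lemma patch0 : is_patch T0.
Proof. by case: Hfix => [[]]. Qed.

Lemma cover0 y : exists t, T0 t /\ tsupp t y.
Proof. by case: Hfix => [[_ H] _]. Qed.

Lemma T0_ivl t : T0 t -> exists j x, t = tr (proto j) x /\ ivl t (a j + x) (l j).
Proof.
move=> Ht; have [_ [H _]] := Hfix; have [j [x ->]] := H t Ht.
exists j, x; split => //; exact: ivl_tr.
Qed.

Lemma T0_some t : T0 t -> exists u w, ivl t u w.
Proof. by move=> /T0_ivl [j [x [_ H]]]; exists (a j + x), (l j). Qed.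

Lemma T0_w t u w : T0 t -> ivl t u w -> exists j, w = l j.
Proof.
move=> /T0_ivl [j [x [_ H]]] H'; exists j.
by have [_ ->] := ivl_uniq H' H.
Qed.

Lemma T0_wmu t u w : T0 t -> ivl t u w -> mu <= w.
Proof. by move=> Ht Hi; have [j ->] := T0_w Ht Hi; apply Hmul. Qed.

Definition E (s : R) := exists t w, T0 t /\ ivl t s w.

Lemma ovl t1 t2 u1 w1 u2 w2 z : T0 t1 -> T0 t2 -> ivl t1 u1 w1 -> ivl t2 u2 w2 ->
  u1 < z < u1 + w1 -> u2 < z < u2 + w2 -> u1 = u2 /\ w1 = w2.
Proof. by apply: overlap; exact: patch0. Qed.

Lemma right_end t s w : T0 t -> ivl t s w -> E (s + w).
Proof.
move=> Ht Hi; have Hw := T0_wmu Ht Hi.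
have [B [HB HBy]] := cover0 (s + w + mu / 2).
have [u' [w' HB']] := T0_some HB.
have Hw' := T0_wmu HB HB'.
have [_ HiB] := HB'; have [Hw0 _] := Hi.
have [hB1 hB2] := proj1 (HiB _) HBy.
case: (Rlt_le_dec u' (s + w)) => h1.
  have m1 := Rmax_l s u'; have m2 := Rmax_r s u'.
  have m3 : Rmax s u' < s + w by apply Rmax_lub_lt; lra.
  have [e1 e2] := ovl Ht HB Hi HB' (z := (Rmax s u' + (s + w)) / 2)
    ltac:(lra) ltac:(lra).
  lra.
case: (Rle_lt_or_eq_dec _ _ h1) => h2; last by exists B, w'; rewrite h2.
exfalso.
have [C [HC HCy]] := cover0 ((s + w + u') / 2).
have [u'' [w'' HC']] := T0_some HC.
have Hw'' := T0_wmu HC HC'.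
have [_ HiC] := HC'.
have [hC1 hC2] := proj1 (HiC _) HCy.
have h3 : s + w <= u''.
  apply: Rnot_lt_le => h3.
  have m1 := Rmax_l s u''; have m2 := Rmax_r s u''.
  have m3 : Rmax s u'' < s + w by apply Rmax_lub_lt; lra.
  have [e1 e2] := ovl Ht HC Hi HC' (z := (Rmax s u'' + (s + w)) / 2)
    ltac:(lra) ltac:(lra).
  lra.
have m1 := Rmin_l (u'' + w'') (u' + w'); have m2 := Rmin_r (u'' + w'') (u' + w').
have m3 : u' < Rmin (u'' + w'') (u' + w') by apply Rmin_glb_lt; lra.
have [e1 e2] := ovl HC HB HC' HB' (z := (u' + Rmin (u'' + w'') (u' + w')) / 2)
  ltac:(lra) ltac:(lra).
lra.
Qed.

Lemma step s t : E s -> E t -> s < t -> exists j, E (s + l j) /\ s + l j <= t.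
Proof.
move=> [t1 [w1 [H1 I1]]] [t2 [w2 [H2 I2]]] hst.
have [j ej] := T0_w H1 I1; exists j; rewrite -ej; split; first exact: right_end I1.
apply: Rnot_lt_le => h.
have [_ _] := I1; have [hw2 _] := I2; have [hw1 _] := I1.
have m1 := Rmin_l (s + w1) (t + w2); have m2 := Rmin_r (s + w1) (t + w2).
have m3 : t < Rmin (s + w1) (t + w2) by apply Rmin_glb_lt; lra.
have [e _] := ovl H1 H2 I1 I2 (z := (t + Rmin (s + w1) (t + w2)) / 2)
  ltac:(lra) ltac:(lra).
lra.
Qed.

Lemma chain n : forall s t, E s -> E t -> s <= t -> t - s <= INR n * mu ->
  exists c : 'cV[rat]_m, natv c /\ t - s = Lc l c.
Proof.
elim: n => [|n IH] s t Es Et hst hn.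
  exists 0%R; split; first by move=> i; exists 0%N; rewrite mxE.
  rewrite Lc0; simpl in hn; toR; lra.
case: (Rle_lt_or_eq_dec _ _ hst) => h; last first.
  exists 0%R; split; first by move=> i; exists 0%N; rewrite mxE.
  rewrite Lc0; subst; toR; lra.
have [j [Ej hj]] := step Es Et h.
have := Hmul j; rewrite S_INR in hn => hmj.
have [c [Hc Hc']] := IH (s + l j) t Ej Et hj ltac:(nra).
exists (c + delta_mx j ord0)%R; split.
  move=> i; have [k hk] := Hc i; exists (k + (i == j))%N.
  by rewrite !mxE hk eqxx andbT natrD; case: (i == j).
rewrite Lc_add Lc_delta -Hc'; toR; lra.
Qed.


Lemma lamE s : E s -> E (lam * s).
Proof.
move=> [t [w [Ht Hi]]].
have [i [x [et Hi']]] := T0_ivl Ht.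
have [es _] := ivl_uniq Hi Hi'.
have [Hlam [_ [_ [_ [_ Hsupp]]]]] := Hrule.
have [Hl0 Hpi] := Hiv i.
have [T [HT HTy]] := proj2 (Hsupp i (lam * a i))
   (ex_intro _ (a i) (conj (proj2 (Hpi (a i)) ltac:(lra)) erefl)).
have HT0 := HT.
move: HT; rewrite /subst_patch => /(@in_seqmap _ _ (fun p : 'I_m * R => tr (proto p.1) p.2)) [p [Hp eT]].
have HivT : ivl T (a p.1 + p.2) (l p.1) by rewrite eT; exact: ivl_tr.
have [hw HT'] := HivT.
have [z [hz ez]] := proj1 (Hsupp i (a p.1 + p.2))
   (ex_intro _ T (conj HT0 (proj2 (HT' (a p.1 + p.2)) ltac:(lra)))).
have [hz1 hz2] := proj1 (Hpi z) hz.
have [hy1 hy2] := proj1 (HT' _) HTy.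
have eu : a p.1 + p.2 = lam * a i by nra.
exists (tr T (lam * x)), (l p.1); split.
  apply (proj1 (proj2 (proj2 Hfix) _)).
  exists i, x; split; first by rewrite -et.
  by exists p; split => //; rewrite -eT.
have -> : lam * s = a p.1 + p.2 + lam * x by rewrite es eu; ring.
exact: ivl_tr.
Qed.

Lemma R1_sumw j : sumw (fun p : 'I_m * R => l p.1) (om j) = lam * l j.
Proof.
have [Hlam [_ [_ [Hnd [Hpat Hsupp]]]]] := Hrule.
have [Hl0 Hpi] := Hiv j.
have := @finlen_aux ('I_m * R) (fun p => tr (proto p.1) p.2) (fun p => a p.1 + p.2)
  (fun p => l p.1) (length (om j)) (om j) (lam * a j) (lam * (a j + l j)) (leqnn _).
have Hin : forall p, List.In p (om j) -> List.In (tr (proto p.1) p.2) (subst_patch proto om j).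
  by move=> p Hp; rewrite /subst_patch; apply: (seqmap_In (fun p => tr (proto p.1) p.2)).
have Hivp : forall p, ivl (tr (proto p.1) p.2) (a p.1 + p.2) (l p.1) by move=> p; exact: ivl_tr.
move=> H; rewrite -H; first ring.
- by move=> p _; exact: Hivp.
- by have := Hnd j; rewrite /subst_patch seqmapE.
- move=> x y Hx Hy ne z [zx zy].
  apply: ((proj2 (Hpat j)) _ _ (Hin x Hx) (Hin y Hy) ne z); split.
    exact: ivl_interior (Hivp x) zx.
  exact: ivl_interior (Hivp y) zy.
- nra.
move=> z; split.
  move=> [p [Hp Hz]].
  have [z' [hz' ez']] := proj1 (Hsupp j z) (ex_intro _ _ (conj (Hin p Hp) (proj2 (proj2 (Hivp p) z) Hz))).
  have := proj1 (Hpi z') hz'; nra.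
move=> Hz.
have ez : lam * (z / lam) = z by field; lra.
have hzl : a j <= z / lam <= a j + l j.
  split; apply (Rmult_le_reg_l lam); try lra; rewrite ez; lra.
have [T [HT HTz]] := proj2 (Hsupp j z) (ex_intro _ (z / lam) (conj (proj2 (Hpi (z / lam)) hzl) (esym ez))).
move: HT; rewrite /subst_patch => /(@in_seqmap _ _ (fun p : 'I_m * R => tr (proto p.1) p.2)) [p [Hp eT]].
exists p; split => //.
by apply (proj1 (proj2 (Hivp p) z)); rewrite -eT.
Qed.


Lemma sumw_count (s : seq ('I_m * R)) :
  sumw (fun p : 'I_m * R => l p.1) s = (\sum_i l i * (count (fun p : 'I_m * R => p.1 == i) s)%:R)%R.
Proof.
elim: s => [|p s IH] /=.
  by rewrite big1 // => i _; rewrite mulr0.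
rewrite IH RplusE.
under eq_bigr => i _ do rewrite natrD mulrDr.
rewrite big_split /=; congr (_ + _)%R.
rewrite (bigD1 p.1) //= eqxx mulr1 big1 ?addr0 // => i /negbTE hi.
by rewrite eq_sym hi mulr0.
Qed.

Lemma R1 j : (\sum_i l i * ratr (subst_mx om i j))%R = lam * l j.
Proof.
rewrite -R1_sumw sumw_count; apply eq_bigr => i _.
by rewrite mxE ratr_nat.
Qed.

End Main.

Local Open Scope ring_scope.

Section LA.
Variable n : nat.
Variable M : 'M[rat]_n.+1.
Variable l : 'I_n.+1 -> R.
Variable lam : R.
Hypothesis HR1 : forall j, \sum_i l i * ratr (M i j) = lam * l j.

Lemma Lc_sum (I : Type) (r : seq I) (f : I -> 'cV[rat]_n.+1) :
  Lc l (\sum_(k <- r) f k) = \sum_(k <- r) Lc l (f k).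
Proof.
elim: r => [|k r IH]; first by rewrite !big_nil Lc0.
by rewrite !big_cons Lc_add IH.
Qed.

Lemma Lc_mul w : Lc l (M *m w) = lam * Lc l w.
Proof.
rewrite /Lc.
under eq_bigr => i _ do rewrite mxE rmorph_sum mulr_sumr.
rewrite exchange_big mulr_sumr; apply eq_bigr => j _ /=.
rewrite mulrA -HR1 mulr_suml; apply eq_bigr => i _.
by rewrite rmorphM mulrA.
Qed.

Lemma mxpowE k : mxpow M k = M ^+ k.
Proof. by elim: k => [|k IH] //=; rewrite exprS IH mulmxE. Qed.

Lemma Lc_pow k w : Lc l (M ^+ k *m w) = lam ^+ k * Lc l w.
Proof.
elim: k => [|k IH]; first by rewrite expr0 mul1mx mul1r.
by rewrite exprS -mulmxE -mulmxA Lc_mul IH mulrA -exprS.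
Qed.

Lemma horner_eigen (c : 'cV[rat]_n.+1) rho : M *m c = rho *: c ->
  forall p, horner_mx M p *m c = p.[rho] *: c.
Proof.
move=> Hc; elim/poly_ind => [|p c0 IH].
  by rewrite rmorph0 mul0mx horner0 scale0r.
rewrite rmorphD rmorphM /= horner_mx_X horner_mx_C hornerMXaddC.
rewrite mulmxDl -mulmxE -mulmxA Hc -scalemxAr IH scalerA.
by rewrite mul_scalar_mx scalerDl mulrC.
Qed.

Lemma no_rat_eigen (c : 'cV[rat]_n.+1) rho :
  (0 < n)%N -> irreducible_poly (char_poly M) -> c != 0 -> M *m c = rho *: c -> False.
Proof.
move=> Hn Hirr Hc0 Hc.
have := horner_eigen Hc (char_poly M); rewrite Cayley_Hamilton mul0mx.
move=> /esym /eqP; rewrite scaler_eq0 (negbTE Hc0) orbF => /eqP Hr.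
have Hroot : root (char_poly M) rho by apply/eqP.
rewrite root_factor_theorem in Hroot.
have := Hirr.2 _ _ Hroot; rewrite size_XsubC => /(_ isT) /eqp_size.
rewrite size_XsubC size_char_poly => -[] e.
by move: Hn; rewrite -e.
Qed.


Lemma indep (w : 'cV[rat]_n.+1) :
  irreducible_poly (char_poly M) -> (forall i, l i != 0) -> Lc l w = 0 -> w = 0.
Proof.
move=> Hirr Hl Hw; apply/eqP; apply: contraT => Hw0.
pose K : 'M[rat]_n.+1 := \matrix_(k, i) (M ^+ k *m w) i ord0.
have HLk : forall k, Lc l (M ^+ k *m w) = 0 by move=> k; rewrite Lc_pow Hw mulr0.
case: (boolP (row_free K)) => HK.
  rewrite row_free_unit in HK.
  have [i _] : exists i : 'I_n.+1, true by exists ord0.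
  pose Ki := invmx K.
  pose u : 'cV[rat]_n.+1 := \sum_k Ki i k *: (M ^+ k *m w).
  have Hu : u = delta_mx i ord0.
    apply/matrixP => i' j'; rewrite (ord1 j') summxE mxE.
    have := congr1 (fun A : 'M[rat]_n.+1 => A i i') (mulVmx HK).
    rewrite !mxE /= => e; rewrite eqxx andbT eq_sym -e; apply eq_bigr => k _; rewrite !mxE //.
  have := Lc_delta l i; rewrite -Hu /u Lc_sum big1.
    by move=> e; move: (Hl i); rewrite -e eqxx.
  by move=> k _; rewrite Lc_scale HLk mulr0.
rewrite -kermx_eq0 in HK.
have [r Hr] : exists r, row r (kermx K) != 0.
  apply/existsP; apply: contraNT HK => /existsPn H.
  by apply/eqP/row_matrixP => r; rewrite row0; apply/eqP/negPn; exact: H.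
set y := row r (kermx K) in Hr.
have Hy : y *m K = 0 by apply/sub_kermxP; exact: row_sub.
pose p : {poly rat} := \poly_(k < n.+1) y ord0 (inord k).
have Hp : horner_mx M p *m w = 0.
  apply/matrixP => i j; rewrite (ord1 j) [RHS]mxE.
  transitivity ((y *m K) ord0 i); last by rewrite Hy mxE.
  rewrite /p poly_def rmorph_sum /= mulmx_suml summxE [RHS]mxE; apply eq_bigr => k _.
  by rewrite inord_val linearZ /= rmorphXn /= horner_mx_X -scalemxAl !mxE.
have Hp0 : p != 0.
  apply/eqP => Hp0; move/eqP: Hr; apply; apply/rowP => k; rewrite [RHS]mxE.
  by have := congr1 (fun q : {poly rat} => q`_k) Hp0; rewrite coef_poly ltn_ord inord_val coef0 => ->.
have Hcop : coprimep (char_poly M) p.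
  rewrite irreducible_poly_coprime //; apply/negP => /(dvdp_leq Hp0).
  by rewrite size_char_poly; move: (size_poly n.+1 (fun k => y ord0 (inord k))) => h1 h2; have := leq_trans h2 h1; rewrite ltnn.
have [[u1 u2] /= Hb] := Bezout_eq1_coprimepP _ _ Hcop.
have := congr1 (horner_mx M) Hb; rewrite rmorphD !rmorphM /= Cayley_Hamilton mulr0 add0r rmorph1.
move=> H1; have ew : w = (horner_mx M u2 * horner_mx M p) *m w by rewrite H1 mul1mx.
by move: Hw0; rewrite ew -mulmxE -mulmxA Hp mulmx0 eqxx.
Qed.

End LA.

Local Open Scope R_scope.

Lemma floor_nat x : 0 <= x -> exists k : nat, INR k <= x < INR k + 1.
Proof.
move=> hx; have [h1 h2] := archimed x.
have hu : Z.le 1 (up x).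
  have : Z.lt 0 (up x) by apply lt_0_IZR; lra.
  lia.
exists (Z.to_nat (Z.sub (up x) 1)).
rewrite INR_IZR_INZ Z2Nat.id; last lia.
rewrite minus_IZR; simpl; lra.
Qed.

Lemma nat_above x : exists k : nat, x <= INR k.
Proof.
have [k [_ hk]] := floor_nat (Rmax_l 0 x).
exists (S k); rewrite S_INR; have := Rmax_r 0 x; lra.
Qed.

Lemma bernoulli lam : 1 < lam -> forall k, 1 + INR k * (lam - 1) <= lam ^ k.
Proof.
move=> hl; elim => [|k IH]; first (simpl; lra).
rewrite S_INR; change (lam ^ k.+1) with (lam * lam ^ k).
have h : 1 <= lam ^ k by apply pow_R1_Rle; lra.
nra.
Qed.


From mathcomp Require lra ring.
Module RA.
Import mathcomp.algebra_tactics.lra mathcomp.algebra_tactics.ring.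
Import mathcomp.order.order.Order.TTheory.
Lemma natdiff_bound (k1 k2 K0 : nat) : (k1 < K0)%N -> (k2 < K0)%N ->
  (`|(k2%:R - k1%:R : rat)| <= K0%:R)%R.
Proof.
move=> h1 h2.
have h1' : (k1%:R <= K0%:R :> rat)%R by rewrite ler_nat ltnW.
have h2' : (k2%:R <= K0%:R :> rat)%R by rewrite ler_nat ltnW.
have h3 : (0 <= k1%:R :> rat)%R by [].
have h4 : (0 <= k2%:R :> rat)%R by [].
rewrite ler_norml; apply/andP; split; lra.
Qed.

Lemma f_bound m (c0 d : 'cV[rat]_m) (K0 : rat) i i0 :
  (forall r, `|d r ord0| <= K0)%R ->
  (`|c0 i0 ord0 * d i ord0 - c0 i ord0 * d i0 ord0| <= (`|c0 i0 ord0| + `|c0 i ord0|) * K0)%R.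
Proof.
move=> Hd.
apply: (le_trans (ler_normB _ _)); rewrite !normrM mulrDl.
by apply: lerD; apply: ler_wpM2l => //; apply: Hd.
Qed.

Lemma Md_bound m (M : 'M[rat]_m) (d : 'cV[rat]_m) (K0 : rat) r :
  (forall s, `|d s ord0| <= K0)%R ->
  (`|(M *m d) r ord0| <= K0 * \sum_r' \sum_s `|M r' s|)%R.
Proof.
move=> Hd; rewrite mxE.
have hK : (0 <= K0)%R.
  case: m M d Hd r => [|m'] M d Hd r; first by case: r.
  exact: le_trans (normr_ge0 _) (Hd ord0).
apply: (le_trans (ler_norm_sum _ _ _)).
apply: (@le_trans _ _ (K0 * \sum_s `|M r s|)%R).
  rewrite mulr_sumr; apply: ler_sum => s _; rewrite normrM mulrC.
  by apply: ler_wpM2r => //; apply: Hd.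
apply: ler_wpM2l => //.
rewrite [X in (_ <= X)%R](bigD1 r) //= lerDl; apply: sumr_ge0 => r' _; apply: sumr_ge0 => s _.
exact: normr_ge0.
Qed.

Lemma phi_eq (A A' ci ci0 mi mi0 di di0 ei ei0 : rat) :
  (A' * ci + di = A * mi + ei -> A' * ci0 + di0 = A * mi0 + ei0 ->
  A * (ci0 * mi - ci * mi0) = (ci0 * di - ci * di0) - (ci0 * ei - ci * ei0))%R.
Proof.
move=> h1 h2.
have h1' : (A * mi = A' * ci + di - ei)%R by rewrite h1; ring.
have h2' : (A * mi0 = A' * ci0 + di0 - ei0)%R by rewrite h2; ring.
have -> : (A * (ci0 * mi - ci * mi0) = ci0 * (A * mi) - ci * (A * mi0))%R by ring.
rewrite h1' h2'; ring.
Qed.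

Lemma phi_bound (A : nat) (phi F1 F2 B1 B2 : rat) :
  (A%:R * phi = F1 - F2 -> `|F1| <= B1 -> `|F2| <= B2 -> A%:R * `|phi| <= B1 + B2)%R.
Proof.
move=> h h1 h2.
have -> : (A%:R * `|phi| = `|A%:R * phi|)%R by rewrite normrM normr_nat.
rewrite h; apply: (le_trans (ler_normB _ _)); exact: lerD.
Qed.

Lemma ratsolve (x y a b : rat) : (a != 0 -> a * x - b * y = 0 -> x = y / a * b)%R.
Proof.
move=> ha h.
have h' : (a * x = b * y)%R by apply/eqP; rewrite -subr_eq0 h.
apply: (mulfI ha); rewrite h'; field; exact: ha.
Qed.

End RA.

Section Core.
Variable n : nat.
Variable proto : 'I_n.+1 -> tile.
Variable lam : R.
Variable om : 'I_n.+1 -> seq ('I_n.+1 * R).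
Variable T0 : tset.
Variables a l : 'I_n.+1 -> R.
Variable mu : R.
Hypothesis Hrule : is_subst_rule proto lam om.
Hypothesis Hfix : fixed_point proto lam om T0.
Hypothesis Hiv : forall j, ivl (proto j) (a j) (l j).
Hypothesis Hmu : 0 < mu.
Hypothesis Hmul : forall j, mu <= l j.
Hypothesis Hirr : irreducible_mx (subst_mx om).
Hypothesis Hn : (0 < n)%N.
Hypothesis Hrep : repetitive T0.

Let M := subst_mx om.
Let HR1 : forall j, (\sum_i l i * ratr (M i j))%R = lam * l j := R1 Hrule Hiv.

Lemma Hl0 i : (l i != 0)%R.
Proof. by have [h _] := Hiv i; apply/eqP; toR; lra. Qed.

Lemma indepM w : Lc l w = 0%R -> w = 0%R.
Proof. exact: (indep HR1 Hirr Hl0). Qed.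

Lemma Hlam : 1 < lam.
Proof. by case: Hrule. Qed.

Lemma Epow k s : E T0 s -> E T0 (lam ^ k * s).
Proof.
elim: k s => [|k IH] s Es /=; first by rewrite Rmult_1_l.
rewrite Rmult_assoc. have := @lamE _ _ _ _ _ _ _ Hrule Hfix Hiv _ (IH _ Es). by [].
Qed.

Lemma Lc_nat_ge0 d : natv d -> 0 <= Lc l d.
Proof.
move=> Hd; rewrite /Lc; apply/RleP; apply: sumr_ge0 => i _.
have [k ->] := Hd i; rewrite ratr_nat; apply: mulr_ge0; last exact: ler0n.
by have [h _] := Hiv i; apply/RleP; toR; lra.
Qed.

Lemma natv_bound d K0 : natv d -> Lc l d < INR K0 * mu ->
  forall i, exists k : nat, d i ord0 = k%:R%R /\ (k < K0)%N.
Proof.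
move=> Hd HL i; have [k hk] := Hd i; exists k; split => //.
rewrite ltnNge; apply/negP => hK.
have : l i * INR k <= Lc l d.
  rewrite /Lc (bigD1 i) //= hk ratr_nat -INRE.
  set S := (\sum_(i0 < n.+1 | i0 != i) _)%R.
  have hS : (0 <= S)%R.
    apply: sumr_ge0 => i' _; have [k' ->] := Hd i'; rewrite ratr_nat.
    apply: mulr_ge0; last exact: ler0n.
    by have [h _] := Hiv i'; apply/RleP; toR; lra.
  move/RleP: hS => hS; rewrite -?R0E in hS; toR; lra.
have : INR K0 <= INR k by apply le_INR; apply/leP.
have := Hmul i; have := pos_INR K0.
nra.
Qed.


Lemma decomp v p N z : 0 < v ->
  (forall k, (1 <= k <= N)%N -> E T0 (p + INR k * v)) -> E T0 z ->
  p + v <= z <= p + INR N * v ->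
  exists (A : nat) (d : 'cV[rat]_n.+1), natv d /\ z = p + INR A * v + Lc l d /\ Lc l d < v.
Proof.
move=> hv Hprog Ez [hz1 hz2].
have e : (z - p) / v * v = z - p by field; lra.
have hx : 0 <= (z - p) / v.
  apply: Rmult_le_pos; [lra | apply Rlt_le; apply Rinv_0_lt_compat; lra].
have [A [hA1 hA2]] := floor_nat hx.
have hAv1 : INR A * v <= z - p by rewrite -e; apply Rmult_le_compat_r; lra.
have hAv2 : z - p < INR A * v + v by rewrite -e; nra.
have hA : (1 <= A <= N)%N.
  apply/andP; split.
    case: A hA1 hA2 hAv1 hAv2 => [|A'] //= *; lra.
  apply/leP; apply INR_le.
  have : (z - p) / v <= INR N.
    apply (Rmult_le_reg_r v) => //; rewrite e; lra.
  lra.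
have EA := Hprog A hA.
have [n' hn'] := nat_above ((z - (p + INR A * v)) / mu).
have hn'' : z - (p + INR A * v) <= INR n' * mu.
  have e' : (z - (p + INR A * v)) / mu * mu = z - (p + INR A * v) by field; lra.
  rewrite -e'; apply Rmult_le_compat_r; lra.
have [d [Hd Hd']] := chain Hfix Hiv Hmu Hmul EA Ez ltac:(lra) hn''.
exists A, d; split => //; split; lra.
Qed.


Lemma Qk v (c0 : 'cV[rat]_n.+1) K0 j s0 :
  0 < v -> natv c0 -> v = Lc l c0 -> v <= INR K0 * mu ->
  E T0 s0 -> E T0 (s0 + l j) ->
  (forall N, exists p, forall k, (1 <= k <= N)%N -> E T0 (p + INR k * v)) ->
  forall k, exists (A : nat) (d : 'cV[rat]_n.+1),
    (forall i, `|d i ord0| <= K0%:R)%R /\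
    (M ^+ k *m delta_mx j ord0 = A%:R *: c0 + d)%R /\
    lam ^ k * l j < (INR A + 1) * v.
Proof.
move=> hv Hc0 ev hK Es0 Es1 H k.
have [t1 [w1 [Ht1 I1]]] := Epow k Es0.
have [t2 [w2 [Ht2 I2]]] := Epow k Es1.
have Hl : forall T, List.In T [:: t1; t2] -> T0 T.
  by move=> T [<-|[<-|[]]].
have [L [hL HL]] := Hrep Hl.
have [N hN] := nat_above ((L + 2 * v) / v).
have hN' : L + 2 * v <= INR N * v.
  have e : (L + 2 * v) / v * v = L + 2 * v by field; lra.
  rewrite -e; apply Rmult_le_compat_r; lra.
have [p Hp] := H N.
have [y [Hy1 Hy2]] := HL (p + v).
have T1 := Hy1 t1 (or_introl erefl).
have T2 := Hy1 t2 (or_intror (or_introl erefl)).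
have J1 := ivl_tr y I1; have J2 := ivl_tr y I2.
have E1 : E T0 (lam ^ k * s0 + y) by exists (tr t1 y), w1.
have E2 : E T0 (lam ^ k * (s0 + l j) + y) by exists (tr t2 y), w2.
have [hw1 J1'] := J1; have [hw2 J2'] := J2.
have B1 := Hy2 t1 _ (or_introl erefl) (proj2 (J1' (lam ^ k * s0 + y)) ltac:(lra)).
have B2 := Hy2 t2 _ (or_intror (or_introl erefl)) (proj2 (J2' (lam ^ k * (s0 + l j) + y)) ltac:(lra)).
have [A1 [d1 [Hd1 [ez1 hd1]]]] := decomp hv Hp E1 ltac:(lra).
have [A2 [d2 [Hd2 [ez2 hd2]]]] := decomp hv Hp E2 ltac:(lra).
have g1 := Lc_nat_ge0 Hd1; have g2 := Lc_nat_ge0 Hd2.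
have hpow : 0 < lam ^ k by apply pow_lt; have := Hlam; lra.
have hlj : 0 < l j by have [] := Hiv j.
have key : lam ^ k * l j = (INR A2 - INR A1) * v + (Lc l d2 - Lc l d1) by nra.
have hA : (A1 <= A2)%N.
  rewrite leqNgt; apply/negP => h.
  have : INR A2 + 1 <= INR A1 by rewrite -S_INR; apply le_INR; apply/leP.
  nra.
exists (A2 - A1)%N, (d2 - d1)%R; split; [|split].
- move=> i.
  have [k1 [ek1 hk1]] := natv_bound Hd1 (Rlt_le_trans _ _ _ hd1 hK) i.
  have [k2 [ek2 hk2]] := natv_bound Hd2 (Rlt_le_trans _ _ _ hd2 hK) i.
  by rewrite !mxE ek1 ek2; apply: RA.natdiff_bound.
- have hA' : INR (A2 - A1)%N = INR A2 - INR A1 by rewrite minus_INR //; apply/leP.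
  apply/eqP; rewrite -subr_eq0; apply/eqP; apply: indepM.
  rewrite !Lc_sub Lc_add Lc_scale (Lc_pow HR1) Lc_delta ratr_nat -RpowE -INRE hA' -ev Lc_sub.
  toR; lra.
- have hA' : INR (A2 - A1)%N = INR A2 - INR A1 by rewrite minus_INR //; apply/leP.
  rewrite hA'; nra.
Qed.


Lemma noprog v : 0 < v ->
  exists N, forall p, ~ (forall k, (1 <= k <= N)%N -> E T0 (p + INR k * v)).
Proof.
move=> hv; apply: NNPP => Hno.
have H : forall N, exists p, forall k, (1 <= k <= N)%N -> E T0 (p + INR k * v).
  move=> N; apply: NNPP => h; apply: Hno; exists N => p hp; apply: h; exists p; exact: hp.
have [p2 Hp2] := H 2%N.
have Ep1 := Hp2 1%N isT; have Ep2 := Hp2 2%N isT.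
have [n1 hn1] := nat_above (v / mu).
have hK : v <= INR n1 * mu.
  have e : v / mu * mu = v by field; lra.
  rewrite -e; apply Rmult_le_compat_r; lra.
have h1 : p2 + INR 1 * v <= p2 + INR 2 * v by simpl; lra.
have h2 : p2 + INR 2 * v - (p2 + INR 1 * v) <= INR n1 * mu by simpl; lra.
have [c0 [Hc0 ec0]] := @chain _ _ _ _ _ _ _ _ Hfix Hiv Hmu Hmul n1 _ _ Ep1 Ep2 h1 h2.
have ev : v = Lc l c0 by rewrite -ec0; simpl; ring.
have [t [Ht _]] := cover0 Hfix 0.
have [j [x0 [_ It]]] := T0_ivl Hfix Hiv Ht.
have Es0 : E T0 (a j + x0) by exists t, (l j).
have Es1 : E T0 (a j + x0 + l j) := right_end Hfix Hiv Hmu Hmul Ht It.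
have Q := Qk hv Hc0 ev hK Es0 Es1 H.
have [i0 hi0] : exists i0, (c0 i0 ord0 != 0)%R.
  apply: NNPP => h.
  have : c0 = 0%R.
    apply/matrixP => i r; rewrite (ord1 r) mxE.
    by apply/eqP; apply: contraT => hh; case: h; exists i.
  move=> e0; move: ev; rewrite e0 Lc0; toR; lra.
have Hc0n : (c0 != 0)%R.
  by apply/eqP => e0; move: hi0; rewrite e0 mxE eqxx.
pose SM : rat := (\sum_r \sum_s `|M r s|)%R.
have Hf : forall i, ((c0 i0 ord0 * (M *m c0) i ord0 - c0 i ord0 * (M *m c0) i0 ord0) = 0)%R.
  move=> i; apply: NNPP => hphi.
  move: hphi; set phi := ((c0 i0 ord0 * (M *m c0) i ord0 - c0 i ord0 * (M *m c0) i0 ord0))%R => hphi.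
  set B : rat := ((`|c0 i0 ord0| + `|c0 i ord0|) * n1%:R + (`|c0 i0 ord0| + `|c0 i ord0|) * (n1%:R * SM))%R.
  have HB : forall k, exists A : nat, (A%:R * `|phi| <= B)%R /\ lam ^ k * l j < (INR A + 1) * v.
    move=> k.
    have [A [d [Hd [eq hlt]]]] := Q k.
    have [A' [d' [Hd' [eq' _]]]] := Q k.+1.
    exists A; split => //.
    have e2 : (M ^+ k.+1 *m delta_mx j ord0 = A%:R *: (M *m c0) + M *m d)%R.
      by rewrite exprS -mulmxE -mulmxA eq mulmxDr scalemxAr.
    rewrite e2 in eq'.
    have ei := congr1 (fun X : 'cV[rat]_n.+1 => X i ord0) eq'.
    have ei0 := congr1 (fun X : 'cV[rat]_n.+1 => X i0 ord0) eq'.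
    have hb2 : forall r, (`|(M *m d) r ord0| <= n1%:R * SM)%R by move=> r; exact: RA.Md_bound.
    move: ei ei0 hb2; rewrite /phi; set MC := (M *m c0)%R; set MD := (M *m d)%R.
    rewrite /= !mxE => ei ei0 hb2.
    have hh := RA.phi_eq (esym ei) (esym ei0).
    apply: (RA.phi_bound hh); first exact: RA.f_bound.
    by have := RA.f_bound c0 i i0 hb2; rewrite /MD !mxE.
  have hphi0 : (0 < `|phi|)%R by rewrite normr_gt0; apply/eqP.
  have hphiR : 0 < ratr `|phi| by apply/RltP; rewrite ltr0q.
  set X := ratr B / ratr `|phi|.
  have hlj : 0 < l j by have [] := Hiv j.
  have hl1 : 0 < lam - 1 by have := Hlam; lra.
  have [k hk] := nat_above (((Rabs X + 1) * v / l j) / (lam - 1)).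
  have hk' : (Rabs X + 1) * v <= lam ^ k * l j.
    have b := bernoulli Hlam k.
    have e1 : ((Rabs X + 1) * v / l j) / (lam - 1) * (lam - 1) * l j = (Rabs X + 1) * v
      by field; lra.
    have : ((Rabs X + 1) * v / l j) / (lam - 1) * (lam - 1) * l j <= INR k * (lam - 1) * l j.
      apply Rmult_le_compat_r; [lra|]; apply Rmult_le_compat_r; lra.
    nra.
  have [A [hA1 hA2]] := HB k.
  have hAX : Rabs X < INR A by nra.
  have hAB : INR A * ratr `|phi| <= ratr B.
    by rewrite INRE -(ratr_nat R) RmultE -rmorphM; apply/RleP; rewrite ler_rat.
  have eX : X * ratr `|phi| = ratr B by rewrite /X; field; lra.
  have hX := Rle_abs X.
  have : X * ratr `|phi| < INR A * ratr `|phi| by apply Rmult_lt_compat_r; lra.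
  lra.
pose rho : rat := ((M *m c0) i0 ord0 / c0 i0 ord0)%R.
apply: (no_rat_eigen (rho := rho) Hn Hirr Hc0n).
apply/matrixP => i r; rewrite (ord1 r) [RHS]mxE.
exact: RA.ratsolve hi0 (Hf i).
Qed.

End Core.

Definition sh (t' t : tile) d := forall y, tsupp t' y <-> tsupp t (y - d).

Lemma sh_ivl t' t d u w : sh t' t d -> ivl t' u w -> ivl t (u - d) w.
Proof.
move=> Hs [hw H]; split => // y.
have e : tsupp t y <-> tsupp t' (y + d).
  by have := Hs (y + d); replace (y + d - d) with y by ring; tauto.
rewrite e H; split; move=> [? ?]; split; lra.
Qed.

Lemma min_pos (X : eqType) (s : seq X) (g : X -> R) :
  (forall x, 0 < g x) -> exists mu, 0 < mu /\ forall x, x \in s -> mu <= g x.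
Proof.
move=> Hg; elim: s => [|y s [mu [hmu Hmu]]].
  by exists 1; split => //; lra.
exists (Rmin (g y) mu); split; first by apply Rmin_pos.
move=> x; rewrite in_cons => /orP [/eqP ->|hx]; first exact: Rmin_l.
apply: Rle_trans (Rmin_r _ _) (Hmu x hx).
Qed.

Section Final.
Variable n : nat.
Variable proto : 'I_n.+1 -> tile.
Variable lam : R.
Variable om : 'I_n.+1 -> seq ('I_n.+1 * R).
Variable T0 : tset.
Variables a l : 'I_n.+1 -> R.
Variable mu : R.
Hypothesis Hrule : is_subst_rule proto lam om.
Hypothesis Hfix : fixed_point proto lam om T0.
Hypothesis Hiv : forall j, ivl (proto j) (a j) (l j).
Hypothesis Hmu : 0 < mu.
Hypothesis Hmul : forall j, mu <= l j.
Hypothesis Hirr : irreducible_mx (subst_mx om).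
Hypothesis Hn : (0 < n)%N.
Hypothesis Hrep : repetitive T0.

Lemma prog_core t v N c : (1 <= N)%N ->
  (forall i, (1 <= i <= N)%N -> exists t', T0 t' /\ sh t' t (INR i * v + c)) ->
  exists p, forall i, (1 <= i <= N)%N -> E T0 (p + INR i * v).
Proof.
move=> hN H.
have [t1 [T1 S1]] := H 1%N ltac:(by rewrite leqnn hN).
have [u1 [w1 I1]] := T0_some Hfix Hiv T1.
have J1 := sh_ivl S1 I1.
exists (u1 - (INR 1 * v + c) + c) => i hi.
have [t' [T' S']] := H i hi.
have [u [w I]] := T0_some Hfix Hiv T'.
have J := sh_ivl S' I.
have [e _] := ivl_uniq J1 J.
exists t', w; split => //.
by replace (u1 - (INR 1 * v + c) + c + INR i * v) with u by lra.
Qed.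

Lemma noprog_any v : v <> 0 ->
  exists N, forall p, ~ (forall k, (1 <= k <= N)%N -> E T0 (p + INR k * v)).
Proof.
move=> hv; case: (Rlt_le_dec 0 v) => hv'.
  by have := @noprog _ _ _ _ _ _ _ _ Hrule Hfix Hiv Hmu Hmul Hirr Hn Hrep _ hv'.
have hv2 : 0 < - v by lra.
have [N HN] := @noprog _ _ _ _ _ _ _ _ Hrule Hfix Hiv Hmu Hmul Hirr Hn Hrep _ hv2.
exists N => p Hp; apply: (HN (p + INR N.+1 * v)) => k /andP [h1 h2].
have hk : (1 <= N.+1 - k <= N)%N.
  apply/andP; split; lia.
have := Hp _ hk.
rewrite minus_INR; last by apply/leP; rewrite ltnW.
by replace (p + (INR N.+1 - INR k) * v) with (p + INR N.+1 * v + INR k * - v) by ring.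
Qed.


Lemma part1 T : in_hull T0 T -> forall (Ti : tile) (v : R), T Ti -> v <> 0 ->
     ~ (forall k : nat, T (tr Ti (INR k * v))).
Proof.
move=> [HTt Hh] Ti v HTi hv Hall.
have [N HN] := noprog_any hv.
case: (posnP N) => [N0|hN].
  by apply: (HN 0) => k; rewrite N0 => /andP [h1 h2]; move: (leq_trans h1 h2).
have [[HT _] _] := HTt.
have [[y0 hy0] _] := HT Ti HTi.
set r := Rabs y0 + INR N * Rabs v + 2.
have hr : 2 <= r by have := Rabs_pos y0; have := Rabs_pos v; have := pos_INR N; rewrite /r; nra.
have heps : 0 < / r by apply Rinv_0_lt_compat; lra.
have [x [a0 [b0 [ha [hb Hag]]]]] := Hh (/ r) heps.
rewrite Rinv_inv in Hag.
have hr1 : / r <= 1 by rewrite -Rinv_1; apply Rinv_le_contravar; lra.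
have Hsh : forall i, (1 <= i <= N)%N -> exists t', T0 t' /\ sh t' Ti (INR i * v + (a0 - x - b0)).
  move=> i /andP [hi1 hi2].
  have hiN : INR i <= INR N by apply le_INR; apply/leP.
  set T' := tr (tr Ti (INR i * v)) a0.
  have inP : ptr T a0 T' by exists (tr Ti (INR i * v)); split => //; exact: Hall.
  have meet : exists y, - r <= y <= r /\ tsupp T' y.
    exists (y0 + INR i * v + a0); split.
      have habs : Rabs (y0 + INR i * v + a0) <= r.
      have t1 := Rabs_triang (y0 + INR i * v) a0.
      have t2 := Rabs_triang y0 (INR i * v).
      rewrite Rabs_mult (Rabs_pos_eq (INR i) (pos_INR i)) in t2.
      have := Rabs_pos v.
      rewrite /r; nra.
      have := Rle_abs (y0 + INR i * v + a0); have := Rle_abs (- (y0 + INR i * v + a0)).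
      rewrite Rabs_Ropp; lra.
    rewrite /T' /=.
    by replace (y0 + INR i * v + a0 - a0 - INR i * v) with y0 by ring.
  have [[T1 [[T'' [HT'' eT1]] eT']] _] := proj1 (Hag T') (conj inP meet).
  exists T''; split => // y.
  have := congr1 tsupp eT'; rewrite eT1 /T' /= => e.
  have := congr1 (fun f => f (y + x + b0)) e => /= e'.
  replace (y + x + b0 - b0 - x) with y in e' by ring.
  rewrite -e'.
  by replace (y + x + b0 - a0 - INR i * v) with (y - (INR i * v + (a0 - x - b0))) by ring.
have [p Hp] := prog_core hN Hsh.
exact: (HN p Hp).
Qed.

Lemma part2 (P : seq tile) (v : R) : P <> [::] -> v <> 0 ->
  exists n0 : nat, ~ legal T0 (union_shifts P v n0).
Proof.
case: P => [//|t P] _ hv.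
have [N HN] := noprog_any hv.
exists N => [[x Hx]].
case: (posnP N) => [N0|hN].
  by apply: (HN 0) => k; rewrite N0 => /andP [h1 h2]; move: (leq_trans h1 h2).
have Hsh : forall i, (1 <= i <= N)%N -> exists t', T0 t' /\ sh t' t (INR i * v + x).
  move=> i hi; exists (tr (tr t (INR i * v)) x); split.
    apply: Hx; exists i; split => //; exists t; split => //; by left.
  move=> y /=.
  by replace (y - x - INR i * v) with (y - (INR i * v + x)) by ring.
have [p Hp] := prog_core hN Hsh.
exact: (HN p Hp).
Qed.

End Final.

Unset Implicit Arguments.
Set Strict Implicit.

Theorem theorem5p4 (m : nat) (proto : 'I_m -> tile) (lam : R)
  (om : 'I_m -> seq ('I_m * R)) (T0 T : tile -> Prop) :
  (1 < m)%N ->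
  is_subst_rule proto lam om ->
  (forall j, interval_support (proto j)) ->
  primitive_mx (subst_mx om) ->
  irreducible_mx (subst_mx om) ->
  fixed_point proto lam om T0 ->
  repetitive T0 ->
  in_hull T0 T ->
  (forall (Ti : tile) (v : R), T Ti -> v <> 0 ->
     ~ (forall k : nat, T (tr Ti (INR k * v)))) /\
  (forall (P : seq tile) (v : R), P <> [::] -> is_patch (of_list P) ->
     legal T0 (of_list P) -> v <> 0 ->
     exists n : nat, ~ legal T0 (union_shifts P v n)).
Proof.
case: m proto om => [|n] proto om; first by [].
move=> Hm Hrule Hint _ Hirr Hfix Hrep Hhull.
have Hn : (0 < n)%N by [].
have Hex : forall j, exists p : R * R, ivl (proto j) p.1 p.2.
  move=> j; have [a0 [b0 [hab H]]] := Hint j; exists (a0, b0 - a0); split => /=; first lra.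
  move=> y; rewrite H; split; move=> [? ?]; split; lra.
pose f j := proj1_sig (constructive_indefinite_description _ (Hex j)).
have Hf : forall j, ivl (proto j) (f j).1 (f j).2.
  by move=> j; exact: (proj2_sig (constructive_indefinite_description _ (Hex j))).
have [mu [hmu Hmu]] := @min_pos _ (enum 'I_n.+1) (fun j => (f j).2) (fun j => proj1 (Hf j)).
have Hmul : forall j, mu <= (f j).2 by move=> j; apply: Hmu; rewrite mem_enum.
split.
  by move=> Ti v; apply: (part1 Hrule Hfix Hf hmu Hmul Hirr Hn Hrep Hhull).
move=> P v HP _ _ hv.
exact: (part2 Hrule Hfix Hf hmu Hmul Hirr Hn Hrep HP hv).
Qed.
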